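(* In the setting in the context, let $$U(D)=\exp\left\{-\frac{\lambda S}{N}\left(1+\frac{\mu}{B\mu-\mu}e^{-B\mu D}-\frac{B\mu}{B\mu-\mu}e^{-\mu D}\right)\right\}$$ be the upper bound on the deadline violation probability under the BETA policy. In the short deadline regime $D\to 0$ (i.e. $\mu D\to 0$ and $B\mu D\to 0$), $U(D)=\exp\{-\frac{\lambda S}{2N}B\mu^2D^2+o(D^2)\}$, so the task computation time lower bound $t_{\mathrm D}$ follows the Rayleigh distribution $$\Pr\{t_{\mathrm D}<D\}=1-e^{-\frac{\lambda S}{2N}B\mu^2D^2},$$ the deadline violation probability upper bound is $1-\Pr\{t_{\mathrm D}<D\}$ for deadline $D$, and the mean computation delay is $\mathbb E[t_{\mathrm D}]=\sqrt{\frac{N\pi}{2\lambda B S\mu^2}}$.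
   Context: Model. Roads of total length $S$ carry vehicles with density $\lambda$; the number of vehicles is Poisson with mean $\lambda S$. There are $B\neq 1$ RSUs. Each vehicle meets any given RSU after an exponential time of rate $\mu$, independently and memorylessly. A task-RSU holds $N$ tasks with common deadline $D$; at each vehicle meeting with the task-RSU an unfinished task is replicated on that vehicle, and a replica's output is returned when the carrying vehicle next meets any of the $B$ RSUs; a task is finished when one replica returns. Tasks are assigned by the BETA policy (always replicate an unfinished task with the fewest replicas). It has been established that under this policy the deadline violation probability is at most $U(D)$. *)

(* Defs.v *)
From HB Require Import structures.
From mathcomp Require Import all_boot all_order all_algebra.
From mathcomp Require Import all_classical all_reals all_analysis.
Set Implicit Arguments. Unset Strict Implicit. Unset Printing Implicit Defensive.
Import Order.TTheory GRing.Theory Num.Theory.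
Local Open Scope ring_scope.

Definition U_bound (R : realType) (lam S mu : R) (N B : nat) (D : R) : R :=
  expR (- (lam * S / N%:R) *
        (1 + mu / (B%:R * mu - mu) * expR (- (B%:R * mu * D))
           - B%:R * mu / (B%:R * mu - mu) * expR (- (mu * D)))).

Definition rayleigh_c (R : realType) (lam S mu : R) (N B : nat) : R :=
  lam * S / (2 * N%:R) * B%:R * mu ^+ 2.

(* Main.v *)
Require Import Defs.
From HB Require Import structures.
From mathcomp Require Import all_boot all_order all_algebra.
From mathcomp Require Import all_classical all_reals all_analysis.
From mathcomp Require Import ring lra.
From mathcomp Require Import measurable_realfun.
Import Order.TTheory GRing.Theory Num.Theory.
Import numFieldNormedType.Exports.
Local Open Scope classical_set_scope.
Local Open Scope ring_scope.

Section S.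
Context {R : realType}.
Let h2 : R -> R := (expR - cst 1 - id - (id ^+ 2) * cst (2^-1)).
Let h3 : R -> R := h2 - (id ^+ 3) * cst (6^-1).

Let dh2 (x : R) : is_derive x 1 h2 (expR x - 1 - x).
Proof.
apply: is_derive_eq.
rewrite /= !fctE scaler0 add0r subr0 /GRing.scale /= expr1.
by rewrite mulr1 mulrA mulVf ?mul1r // pnatr_eq0.
Qed.

Let dh3 (x : R) : is_derive x 1 h3 (h2 x).
Proof.
apply: is_derive_eq.
rewrite /h2 /= !fctE scaler0 add0r /GRing.scale /= mulr1.
rewrite mulr0 add0r subr0 mulr1 expr1.
field; rewrite ?pnatr_eq0 //.
Qed.

Let h2E z : h2 z = expR z - 1 - z - z ^+ 2 / 2.
Proof. by rewrite /h2 !fctE. Qed.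

Let h2le y : y <= 0 -> h2 y <= 0.
Proof.
move=> y0.
  have [|c _ hc] := @MVT_segment R h2 (fun x => expR x - 1 - x) y 0 y0 (fun x _ => dh2 x);
    first by apply: derivable_within_continuous => x _; exact: (@ex_derive _ _ _ _ _ _ _ (dh2 x)).
  have : h2 0 = 0 by rewrite h2E expR0 /=; rewrite expr0n /=; lra.
  have := expR_ge1Dx c.
  move: hc; set u := h2 0; set v := h2 y; set w := expR c => hc H1 H0.
  nra.
Qed.

Lemma taylor_neg (y : R) : y <= 0 -> y ^+ 3 / 6 <= expR y - 1 - y - y ^+ 2 / 2 <= 0.
Proof.
move=> y0.
have h3ge : 0 <= h3 y.
  have [|c cy hc] := @MVT_segment R h3 h2 y 0 y0 (fun x _ => dh3 x);
    first by apply: derivable_within_continuous => x _; exact: (@ex_derive _ _ _ _ _ _ _ (dh3 x)).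
  have : h3 0 = 0 by rewrite /h3 !fctE h2E expR0 /= !expr0n /=; lra.
  have : h2 c <= 0 by apply: h2le; move: cy; rewrite in_itv /= => /andP[].
  move: hc; set u := h3 0; set v := h3 y; set w := h2 c => hc H1 H0.
  nra.
move: h3ge (@h2le y y0); rewrite /h3 !fctE h2E => ??.
apply/andP; split; lra.
Qed.

Lemma part1 (lam S mu : R) (N B : nat)
  (hlam : 0 < lam) (hS : 0 < S) (hmu : 0 < mu) (hN : (0 < N)%N)
  (hB0 : (0 < B)%N) (hB1 : B <> 1%N) :
  (forall eps : R, 0 < eps -> exists2 delta : R, 0 < delta &
     forall D : R, 0 < D -> D < delta ->
       `| ln (U_bound lam S mu N B D) + rayleigh_c lam S mu N B * D ^+ 2 |
         <= eps * D ^+ 2).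
Proof.
move=> eps he.
have B2 : 2 <= B%:R :> R.
  by rewrite (ler_nat R 2 B); case: B hB0 hB1 => [|[|n]].
have hN' : 0 < N%:R :> R by rewrite ltr0n.
set a := B%:R * mu.
have hab : mu < a by rewrite /a; nra.
set k := lam * S / N%:R.
have hk : 0 < k by rewrite /k divr_gt0 // mulr_gt0.
set q := k / (a - mu).
have hq : 0 < q by rewrite /q divr_gt0 // subr_gt0.
set W := (a ^+ 3 * mu + a * mu ^+ 3) / 6.
have hW : 0 <= W by rewrite /W divr_ge0 // addr_ge0 // mulr_ge0 // ?exprn_ge0 //; lra.
set K := q * W.
have hK : 0 <= K by rewrite /K mulr_ge0 //; lra.
exists (eps / (K + 1)); first by rewrite divr_gt0 //; lra.
move=> D D0 Dd.
set E := fun y : R => expR y - 1 - y - y ^+ 2 / 2.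
have key : ln (U_bound lam S mu N B D) + rayleigh_c lam S mu N B * D ^+ 2
   = - q * (mu * E (- (a * D)) - a * E (- (mu * D))).
  rewrite /U_bound expRK /rayleigh_c /q /k /E -/a.
  rewrite /= /a.
  field.
  by apply/andP; split; [rewrite subr_eq0 gt_eqF | rewrite gt_eqF].
rewrite key.
have t1 := @taylor_neg (- (a * D)).
have t2 := @taylor_neg (- (mu * D)).
have aD : 0 <= a * D by rewrite mulr_ge0 //; lra.
have mD : 0 <= mu * D by rewrite mulr_ge0 //; lra.
have {t1}/andP[t1l t1u] : (- (a * D)) ^+ 3 / 6 <= E (- (a * D)) <= 0 by apply: t1; lra.
have {t2}/andP[t2l t2u] : (- (mu * D)) ^+ 3 / 6 <= E (- (mu * D)) <= 0 by apply: t2; lra.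
set e1 := E _ in t1l t1u *; set e2 := E _ in t2l t2u *.
have z1 : mu * ((- (a * D)) ^+ 3 / 6) <= mu * e1 by rewrite ler_pM2l.
have z2 : a * e2 <= 0 by rewrite mulr_ge0_le0 //; lra.
have z3 : mu * e1 <= 0 by rewrite mulr_ge0_le0 //; lra.
have z4 : a * ((- (mu * D)) ^+ 3 / 6) <= a * e2 by rewrite ler_pM2l //; lra.
have zlo : - (W * D ^+ 3) <= mu * e1 - a * e2.
  have : mu * ((- (a * D)) ^+ 3 / 6) = - (a ^+ 3 * mu / 6 * D ^+ 3) by rewrite /W; ring.
  have : 0 <= a * mu ^+ 3 / 6 * D ^+ 3.
    by rewrite mulr_ge0 ?divr_ge0 ?mulr_ge0 ?exprn_ge0 //; lra.
  have : W = a ^+ 3 * mu / 6 + a * mu ^+ 3 / 6 by rewrite /W; field.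
  move=> ->; lra.
have zhi : mu * e1 - a * e2 <= W * D ^+ 3.
  have : a * ((- (mu * D)) ^+ 3 / 6) = - (a * mu ^+ 3 / 6 * D ^+ 3) by ring.
  have : 0 <= a ^+ 3 * mu / 6 * D ^+ 3.
    by rewrite mulr_ge0 ?divr_ge0 ?mulr_ge0 ?exprn_ge0 //; lra.
  have : W = a ^+ 3 * mu / 6 + a * mu ^+ 3 / 6 by rewrite /W; field.
  move=> ->; lra.
have hz : `|mu * e1 - a * e2| <= W * D ^+ 3 by rewrite ler_norml; apply/andP; split.
have KD : K * D <= eps.
  move: Dd; rewrite ltr_pdivlMr; last lra.
  lra.
rewrite normrM normrN (gtr0_norm hq).
apply: (le_trans (ler_wpM2l (ltW hq) hz)).
rewrite mulrA -/K exprSr.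
have -> : K * (D ^+ 2 * D) = (K * D) * D ^+ 2 by ring.
rewrite ler_wpM2r // exprn_ge0 //; lra.
Qed.
End S.

Section P2.
Context {R : realType}.

Lemma expN_diff (u v : R) : 0 <= u -> u <= v -> expR (- u) - expR (- v) <= v - u.
Proof.
move=> u0 uv.
have e1 : expR (- v) = expR (- u) * expR (- (v - u)) by rewrite -expRD; congr expR; ring.
have e2 := expR_ge1Dx (- (v - u)).
have e3 : expR (- u) <= 1 by rewrite expR_le1; lra.
have e4 := expR_ge0 (- u).
rewrite e1; nra.
Qed.

Lemma squeeze_le (c r p : R) : 0 < c -> 0 <= r ->
  (forall h, 0 < h -> p <= 1 - expR (- (c * (r + h) ^+ 2))) ->
  p <= 1 - expR (- (c * r ^+ 2)).
Proof.
move=> hc r0 H; apply/ler_addgt0Pr => e he.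
set h := Num.min 1 (e / (c * (2 * r + 1))).
have hc' : 0 < c * (2 * r + 1) by rewrite mulr_gt0 //; lra.
have h0 : 0 < h by rewrite /h lt_min ltr01 divr_gt0.
have h1 : h <= 1 by rewrite /h ge_min lexx.
have h2 : h * (c * (2 * r + 1)) <= e.
  by rewrite -ler_pdivlMr // /h ge_min lexx orbT.
have := H h h0.
have := @expN_diff (c * r ^+ 2) (c * (r + h) ^+ 2).
have q1 : 0 <= c * r ^+ 2 by rewrite mulr_ge0 // ?exprn_ge0 //; lra.
have q2 : c * r ^+ 2 <= c * (r + h) ^+ 2 by rewrite ler_pM2l // lerXn2r // ?nnegrE; lra.
move=> /(_ q1 q2).
have : c * (r + h) ^+ 2 - c * r ^+ 2 <= e.
  have -> : c * (r + h) ^+ 2 - c * r ^+ 2 = h * (c * (2 * r + h)) by ring.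
  apply: le_trans h2; rewrite ler_pM2l // ler_pM2l //; lra.
lra.
Qed.

Lemma part2 (c : R) (hc : 0 < c) (d : measure_display) (T : measurableType d)
  (P : probability T R) (tD : {RV P >-> R}) :
  (forall D : R, 0 <= D -> P [set w : T | tD w < D] = (1 - expR (- (c * D ^+ 2)))%:E) ->
  ('E_P[tD] = (Num.sqrt pi / 2 / Num.sqrt c)%:E)%E.
Proof.
move=> HP.
pose Y : {RV P >-> R} := measurable_realfun.max_mfun tD (cst 0%R).
have mneg : measurable [set w : T | tD w < 0].
  have -> : [set w : T | tD w < 0] = tD @^-1` `]-oo, 0[.
    by apply/seteqP; split => w /=; rewrite in_itv.
  exact: measurable_funPTI.
have Pneg : P [set w : T | tD w < 0] = 0%E.
  by rewrite HP // expr0n /= mulr0 oppr0 expR0 subrr.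
have EY : ('E_P[tD] = 'E_P[Y])%E.
  rewrite !expectation_def; apply: ae_eq_integral => //.
  - by apply/measurable_EFinP; exact: measurable_funPT.
  - by apply/measurable_EFinP; exact: measurable_funPT.
  exists [set w : T | tD w < 0]; split => // w /= hw.
  rewrite ltNge; apply/negP => tw; apply: hw => _.
  by rewrite /Y /= max_l.
rewrite EY (@ge0_expectation_ccdf _ _ _ _ Y); last by move=> w; rewrite /Y /= le_max lexx orbT.
transitivity (\int[lebesgue_measure]_(r in `[0%R, +oo[) (expR (- (c * r ^+ 2)))%:E)%E.
  apply: eq_integral => r; rewrite inE /= in_itv /= andbT => r0.
  rewrite /ccdf.
  have -> : distribution P Y `]r, +oo[ = P (Y @^-1` `]r, +oo[) by [].
  have -> : Y @^-1` `]r, +oo[ = ~` [set w | tD w <= r].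
    apply/seteqP; split => w /=; rewrite in_itv /= andbT lt_max (ltNge r 0) r0 orbF ltNge;
      by move/negP.
  have mA : measurable [set w | tD w <= r].
    have -> : [set w : T | tD w <= r] = tD @^-1` `]-oo, r].
      by apply/seteqP; split => w /=; rewrite in_itv.
    exact: measurable_funPTI.
  rewrite probability_setC //.
  have mlt : forall x, measurable [set w : T | tD w < x].
    move=> x; have -> : [set w : T | tD w < x] = tD @^-1` `]-oo, x[.
      by apply/seteqP; split => w /=; rewrite in_itv.
    exact: measurable_funPTI.
  have PA : P [set w | tD w <= r] = (1 - expR (- (c * r ^+ 2)))%:E.
    rewrite -(fineK (fin_num_measure P _ mA)); congr EFin.
    apply/le_anti/andP; split.
      apply: (@squeeze_le c r) => // h h0.
      rewrite -lee_fin fineK ?fin_num_measure // -HP; last lra.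
      apply: le_measure; rewrite ?inE //.
      by move=> w /=; lra.
    rewrite -lee_fin fineK ?fin_num_measure // -HP //.
    apply: le_measure; rewrite ?inE //.
    by move=> w /=; apply: ltW.
  rewrite PA -EFinB; congr EFin; ring.
set k := Num.sqrt c.
have hk : 0 < k by rewrite sqrtr_gt0.
have kk : k ^+ 2 = c by rewrite sqr_sqrtr // ltW.
pose F : R -> R := (cst k * id)%R.
have iF (x : R) : is_derive x (1:R) F k.
  apply: is_derive_eq. 
  by rewrite scaler0 addr0 /GRing.scale /= mulr1.
have FE (x : R) : F x = k * x by [].
have F0 : F 0 = 0 by rewrite FE mulr0.
have F'E : derive1 F = cst k.
  by apply/funext => x; rewrite derive1E (@derive_val _ _ _ _ _ _ _ (iF x)).
have dF (x : R) : derivable F x 1 := @ex_derive _ _ _ _ _ _ _ (iF x).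
have cF : continuous F.
  by move=> x; apply: differentiable_continuous; apply/derivable1_diffP; exact: dF.
have sub : (\int[lebesgue_measure]_(x in `[0%R, +oo[) (gauss_fun x)%:E =
  \int[lebesgue_measure]_(x in `[0%R, +oo[) (((gauss_fun \o F) * derive1 F) x)%:E)%E.
  have := @increasing_ge0_integration_by_substitutiony R F gauss_fun 0.
  rewrite F0; apply.
  - by move=> x y _ _ xy; rewrite !FE ltr_pM2l.
  - by rewrite F'E => x _; exact: cst_continuous.
  - by rewrite F'E; exact: is_cvg_cst.
  - by rewrite F'E; exact: is_cvg_cst.
  - split; first by move=> x _; exact: dF.
    exact: cvg_at_right_filter (cF 0).
  - exact: gt0_cvgMry hk cvg_id.
  - exact: continuous_subspaceT continuous_gauss_fun.
  - by move=> x _; exact: gauss_fun_ge0.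
rewrite integral0y_gauss in sub.
have gE (x : R) : expR (- (c * x ^+ 2)) = gauss_fun (F x).
  by rewrite /= /gauss_fun FE exprMn kk.
have meas : measurable_fun (`[0%R, +oo[ : set R) (fun x : R => (expR (- (c * x ^+ 2)))%:E).
  apply/measurable_EFinP; apply: measurable_funTS.
  rewrite (_ : (fun x : R => expR (- (c * x ^+ 2))) = gauss_fun \o F); last first.
    by apply/funext => x; rewrite gE.
  apply: measurableT_comp; first exact: measurable_gauss_fun.
  exact: continuous_measurable_fun.
have eqI : (fun x => (((gauss_fun \o F) * derive1 F) x)%:E) =
   (fun x : R => (k%:E * (expR (- (c * x ^+ 2)))%:E)%E).
  by apply/funext => x; rewrite F'E gE -EFinM mulrC.
rewrite eqI ge0_integralZl // in sub; last by rewrite lee_fin ltW.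
set I := (\int[lebesgue_measure]_(x in _) _)%E in sub *.
have -> : I = ((k^-1)%:E * (k%:E * I))%E.
  by rewrite muleA -EFinM mulVf ?gt_eqF // mul1e.
by rewrite -sub -EFinM mulrC.
Qed.
End P2.

Theorem corollary1 (R : realType) (lam S mu : R) (N B : nat)
  (hlam : 0 < lam) (hS : 0 < S) (hmu : 0 < mu) (hN : (0 < N)%N)
  (hB0 : (0 < B)%N) (hB1 : B <> 1%N) :
  (* ln U(D) = - (lam S /(2N)) B mu^2 D^2 + o(D^2) as D -> 0+ *)
  (forall eps : R, 0 < eps -> exists2 delta : R, 0 < delta &
     forall D : R, 0 < D -> D < delta ->
       `| ln (U_bound lam S mu N B D) + rayleigh_c lam S mu N B * D ^+ 2 |
         <= eps * D ^+ 2)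
  /\
  (* any t_D with Rayleigh law Pr{t_D < D} = 1 - exp(-c D^2) has the stated mean *)
  (forall (d : measure_display) (T : measurableType d)
          (P : probability T R) (tD : {RV P >-> R}),
     (forall D : R, 0 <= D ->
        P [set w : T | tD w < D] = (1 - expR (- (rayleigh_c lam S mu N B * D ^+ 2)))%:E) ->
     ('E_P[tD] = (Num.sqrt (N%:R * pi / (2 * lam * B%:R * S * mu ^+ 2)))%:E)%E).
Proof.
split; first exact: part1.
move=> d T P tD HP.
have hN' : 0 < N%:R :> R by rewrite ltr0n.
have hB' : 0 < B%:R :> R by rewrite ltr0n.
set c := rayleigh_c lam S mu N B.
have hc : 0 < c.
  rewrite /c /rayleigh_c; apply: mulr_gt0; last exact: exprn_gt0.
  apply: mulr_gt0 => //; apply: divr_gt0; [exact: mulr_gt0|].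
  by apply: mulr_gt0.
rewrite (@part2 R c hc d T P tD HP); congr EFin.
have hsc : 0 < Num.sqrt c by rewrite sqrtr_gt0.
have -> : N%:R * pi / (2 * lam * B%:R * S * mu ^+ 2) = (Num.sqrt pi / 2 / Num.sqrt c) ^+ 2.
  rewrite !expr_div_n !sqr_sqrtr ?pi_ge0 ?ltW // /c /rayleigh_c.
  field.
  by rewrite !gt_eqF.
by rewrite sqrtr_sqr ger0_norm //.
Qed.
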